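(* Let $G$ be a torsion-free hyperbolic group. Then every retract of $G$ is malnormal in $G$.
   Context: A subgroup $H\le G$ is a retract of $G$ if there is a homomorphism $\phi:G\to H$ with $\phi(h)=h$ for all $h\in H$. A subgroup $H\le G$ is malnormal if $H\cap gHg^{-1}=\{e\}$ for all $g\in G\setminus H$. *)

(* Defs.v *)
From Stdlib Require Import ZArith List.
Import ListNotations.


Record Group := {
  carrier :> Type;
  mul : carrier -> carrier -> carrier;
  one : carrier;
  inv : carrier -> carrier;
  mulA : forall x y z, mul x (mul y z) = mul (mul x y) z;
  mul1g : forall x, mul one x = x;
  mulVg : forall x, mul (inv x) x = one
}.

Section Defs.
Variable G : Group.

Fixpoint gpow (g : G) (n : nat) : G :=
  match n with O => one G | S m => mul G g (gpow g m) end.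

Definition torsion_free : Prop :=
  forall (g : G) (n : nat), gpow g (S n) = one G -> g = one G.

Definition is_subgroup (H : G -> Prop) : Prop :=
  H (one G) /\ (forall x y, H x -> H y -> H (mul G x y)) /\
  (forall x, H x -> H (inv G x)).

Definition is_hom (phi : G -> G) : Prop :=
  forall x y, phi (mul G x y) = mul G (phi x) (phi y).

Definition is_retract (H : G -> Prop) : Prop :=
  exists phi : G -> G, is_hom phi /\ (forall g, H (phi g)) /\
    (forall h, H h -> phi h = h).

Definition malnormal (H : G -> Prop) : Prop :=
  forall g, ~ H g -> forall x, H x -> H (mul G g (mul G x (inv G g))) -> x = one G.

Definition prodl (l : list G) : G := fold_right (mul G) (one G) l.

Definition has_len (S : list G) (g : G) (n : nat) : Prop :=
  exists l : list G, length l = n /\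
    Forall (fun s => In s S \/ In (inv G s) S) l /\ prodl l = g.

Definition generates (S : list G) : Prop := forall g, exists n, has_len S g n.

Definition word_len (S : list G) (g : G) (n : nat) : Prop :=
  has_len S g n /\ forall m, has_len S g m -> n <= m.

Definition wdist (S : list G) (x y : G) (n : nat) : Prop :=
  word_len S (mul G (inv G x) y) n.

(* Gromov's (Gromov-product) definition of delta-hyperbolicity of the word
   metric, with all quantities doubled to stay in Z:
   (x|z)_w >= min((x|y)_w, (y|z)_w) - delta, where
   2 (x|y)_w = d(w,x) + d(w,y) - d(x,y). *)
Definition delta_hyperbolic (S : list G) (delta : nat) : Prop :=
  forall x y z w : G, forall dwx dwy dwz dxy dyz dxz : nat,
    wdist S w x dwx -> wdist S w y dwy -> wdist S w z dwz ->
    wdist S x y dxy -> wdist S y z dyz -> wdist S x z dxz ->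
    (Z.of_nat dwx + Z.of_nat dwz - Z.of_nat dxz >=
     Z.min (Z.of_nat dwx + Z.of_nat dwy - Z.of_nat dxy)
           (Z.of_nat dwy + Z.of_nat dwz - Z.of_nat dyz) - 2 * Z.of_nat delta)%Z.

Definition hyperbolic_group : Prop :=
  exists (S : list G) (delta : nat), generates S /\ delta_hyperbolic S delta.

End Defs.

(* Main.v *)
Require Import Defs.
From Stdlib Require Import ZArith List Lia Arith FinFun Classical ClassicalEpsilon.
Import ListNotations.

Lemma g_mulgV (G : Group) (x : G) : mul G x (inv G x) = one G.
Proof.
  transitivity (mul G (mul G (inv G (inv G x)) (inv G x)) (mul G x (inv G x))).
  - rewrite mulVg, mul1g. reflexivity.
  - rewrite <- mulA. rewrite (mulA G (inv G x) x), mulVg, mul1g. apply mulVg.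
Qed.

Lemma g_mulg1 (G : Group) (x : G) : mul G x (one G) = x.
Proof. rewrite <- (mulVg G x), mulA, g_mulgV, mul1g. reflexivity. Qed.

Lemma g_mulKg (G : Group) (x y : G) : mul G (inv G x) (mul G x y) = y.
Proof. rewrite mulA, mulVg, mul1g. reflexivity. Qed.

Lemma g_mulVKg (G : Group) (x y : G) : mul G x (mul G (inv G x) y) = y.
Proof. rewrite mulA, g_mulgV, mul1g. reflexivity. Qed.

Lemma g_cancel (G : Group) (x y z : G) : mul G x y = mul G x z -> y = z.
Proof. intro E. rewrite <- (g_mulKg G x y), E, g_mulKg. reflexivity. Qed.

Lemma g_invK (G : Group) (x : G) : inv G (inv G x) = x.
Proof. apply (g_cancel G (inv G x)). rewrite g_mulgV, mulVg. reflexivity. Qed.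

Lemma g_invM (G : Group) (x y : G) : inv G (mul G x y) = mul G (inv G y) (inv G x).
Proof.
  apply (g_cancel G (mul G x y)). rewrite g_mulgV.
  rewrite <- mulA, (mulA G y), g_mulgV, mul1g, g_mulgV. reflexivity.
Qed.

Lemma g_inv1 (G : Group) : inv G (one G) = one G.
Proof. rewrite <- (g_mulg1 G (inv G (one G))). apply mulVg. Qed.

Lemma g_inv_uniq (G : Group) (x y : G) : mul G x y = one G -> y = inv G x.
Proof. intro E. apply (g_cancel G x). rewrite E, g_mulgV. reflexivity. Qed.

Lemma gpowD (G : Group) (g : G) n m : gpow G g (n + m) = mul G (gpow G g n) (gpow G g m).
Proof. induction n; simpl. - rewrite mul1g; auto. - rewrite IHn, mulA; auto. Qed.

Lemma gpow_comm (G : Group) (a b : G) : mul G a b = mul G b a ->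
  forall n, mul G (gpow G a n) b = mul G b (gpow G a n).
Proof.
  intros E n; induction n; simpl.
  - rewrite mul1g, g_mulg1; auto.
  - rewrite <- mulA, IHn, !mulA, E. auto.
Qed.

Lemma gpow_hom (G : Group) (phi : G -> G) : is_hom G phi -> phi (one G) = one G ->
  forall g n, phi (gpow G g n) = gpow G (phi g) n.
Proof. intros hp h1 g n; induction n; simpl; auto. rewrite hp, IHn; auto. Qed.

Lemma gpow_one (G : Group) n : gpow G (one G) n = one G.
Proof. induction n; simpl; auto. rewrite IHn, mul1g; auto. Qed.

Lemma gpow_inj (G : Group) (tf : torsion_free G) (a : G) : a <> one G ->
  forall n n', gpow G a n = gpow G a n' -> n = n'.
Proof.
  intros ha.
  assert (K : forall n k, gpow G a n = gpow G a (n + S k) -> False).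
  { intros n k E. rewrite gpowD in E.
    rewrite <- (g_mulg1 G (gpow G a n)) in E at 1.
    apply g_cancel in E. apply ha. apply (tf a k). auto. }
  intros n n' E. destruct (lt_eq_lt_dec n n') as [[h|h]|h]; auto.
  - exfalso. replace n' with (n + S (n' - n - 1)) in E by lia. eauto.
  - exfalso. replace n with (n' + S (n - n' - 1)) in E by lia. eauto.
Qed.

Definition letter (G : Group) (S : list G) (s : G) : Prop := In s S \/ In (inv G s) S.

Lemma prodl_app (G : Group) (l1 l2 : list G) : prodl G (l1 ++ l2) = mul G (prodl G l1) (prodl G l2).
Proof. induction l1; simpl. - rewrite mul1g; auto. - rewrite IHl1, mulA; auto. Qed.

Lemma has_len_mul (G : Group) S g h n m : has_len G S g n -> has_len G S h m -> has_len G S (mul G g h) (n + m).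
Proof.
  intros [l1 [L1 [F1 P1]]] [l2 [L2 [F2 P2]]]. exists (l1 ++ l2). split; [|split].
  - rewrite length_app; lia.
  - apply Forall_app; auto.
  - rewrite prodl_app; subst; auto.
Qed.

Lemma prodl_rev_inv (G : Group) (l : list G) : prodl G (rev (map (inv G) l)) = inv G (prodl G l).
Proof.
  induction l; simpl. - rewrite g_inv1; auto.
  - rewrite prodl_app, IHl. simpl. rewrite g_mulg1, g_invM. auto.
Qed.

Lemma has_len_inv (G : Group) S g n : has_len G S g n -> has_len G S (inv G g) n.
Proof.
  intros [l [L [F P]]]. exists (rev (map (inv G) l)). split; [|split].
  - rewrite length_rev, length_map; auto.
  - apply Forall_rev. apply Forall_map. eapply Forall_impl; [|exact F].
    intros s [h|h]; [right; rewrite g_invK; auto | left; auto].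
  - rewrite prodl_rev_inv, P; auto.
Qed.

Lemma has_len_one (G : Group) S : has_len G S (one G) 0.
Proof. exists []. simpl. repeat split; auto. Qed.

Lemma word_len_ex (G : Group) S g : generates G S -> exists n, word_len G S g n.
Proof.
  intros gen. destruct (gen g) as [n Hn].
  induction n as [n IH] using (well_founded_induction lt_wf).
  destruct (classic (exists m, m < n /\ has_len G S g m)) as [[m [lm hm]]|no].
  - eauto.
  - exists n. split; auto. intros m hm. destruct (le_lt_dec n m); auto.
    exfalso; eauto.
Qed.

Definition nrm (G : Group) (S : list G) (g : G) : nat :=
  epsilon (inhabits 0) (fun n => word_len G S g n).


Lemma nrm_spec (G : Group) S (gen : generates G S) g : word_len G S g (nrm G S g).
Proof. unfold nrm. apply epsilon_spec. apply word_len_ex; auto. Qed.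

Lemma nrm_has (G : Group) S (gen : generates G S) g : has_len G S g (nrm G S g).
Proof. apply nrm_spec; auto. Qed.

Lemma nrm_le (G : Group) S (gen : generates G S) g n : has_len G S g n -> nrm G S g <= n.
Proof. intro h. apply (nrm_spec G S gen g); auto. Qed.

Lemma nrm_mul (G : Group) S (gen : generates G S) g h : nrm G S (mul G g h) <= nrm G S g + nrm G S h.
Proof. apply nrm_le; auto. apply has_len_mul; apply nrm_has; auto. Qed.

Lemma nrm_inv (G : Group) S (gen : generates G S) g : nrm G S (inv G g) = nrm G S g.
Proof.
  apply Nat.le_antisymm; apply nrm_le; auto.
  - apply has_len_inv, nrm_has; auto.
  - rewrite <- (g_invK G g) at 1. apply has_len_inv, nrm_has; auto.
Qed.

Lemma nrm_one (G : Group) S (gen : generates G S) : nrm G S (one G) = 0.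
Proof. pose proof (nrm_le G S gen (one G) 0 (has_len_one G S)). lia. Qed.

Definition dd (G : Group) S (x y : G) : nat := nrm G S (mul G (inv G x) y).

Lemma dd_sym (G : Group) S (gen : generates G S) x y : dd G S x y = dd G S y x.
Proof. unfold dd. rewrite <- nrm_inv by auto. rewrite g_invM, g_invK. auto. Qed.

Lemma dd_tri (G : Group) S (gen : generates G S) x y z : dd G S x z <= dd G S x y + dd G S y z.
Proof.
  unfold dd. replace (mul G (inv G x) z) with (mul G (mul G (inv G x) y) (mul G (inv G y) z)).
  - apply nrm_mul; auto.
  - rewrite <- mulA, g_mulVKg. auto.
Qed.

Lemma dd_left (G : Group) S g x y : dd G S (mul G g x) (mul G g y) = dd G S x y.
Proof. unfold dd. rewrite g_invM, <- mulA, g_mulKg. auto. Qed.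

Lemma dd_one (G : Group) S x : dd G S (one G) x = nrm G S x.
Proof. unfold dd. rewrite g_inv1, mul1g. auto. Qed.

Lemma dd_one_r (G : Group) S x : dd G S x (one G) = nrm G S (inv G x).
Proof. unfold dd. rewrite g_mulg1. auto. Qed.

Lemma hyp4 (G : Group) S (gen : generates G S) delta (hd : delta_hyperbolic G S delta) w x y z :
  (Z.of_nat (dd G S w x) + Z.of_nat (dd G S w z) - Z.of_nat (dd G S x z) >=
   Z.min (Z.of_nat (dd G S w x) + Z.of_nat (dd G S w y) - Z.of_nat (dd G S x y))
         (Z.of_nat (dd G S w y) + Z.of_nat (dd G S w z) - Z.of_nat (dd G S y z)) - 2 * Z.of_nat delta)%Z.
Proof. apply (hd x y z w); unfold wdist, dd; apply nrm_spec; auto. Qed.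

Fixpoint words (G : Group) (A : list G) (n : nat) : list (list G) :=
  match n with
  | O => [[]]
  | S k => flat_map (fun s => map (cons s) (words G A k)) A
  end.

Lemma words_in (G : Group) (A : list G) (l : list G) :
  Forall (fun s => In s A) l -> In l (words G A (length l)).
Proof.
  induction 1; simpl; auto.
  apply in_flat_map. exists x. split; auto. apply in_map; auto.
Qed.

Definition ball (G : Group) S (r : nat) : list G :=
  flat_map (fun m => map (prodl G) (words G (S ++ map (inv G) S) m)) (seq 0 (Datatypes.S r)).

Lemma ball_in (G : Group) S (gen : generates G S) r g : nrm G S g <= r -> In g (ball G S r).
Proof.
  intro h. destruct (nrm_has G S gen g) as [l [L [F P]]].
  remember (nrm G S g) as m.
  apply in_flat_map. exists m. split.
  - apply in_seq. lia.
  - rewrite <- P. apply in_map. rewrite <- L. apply words_in.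
    eapply Forall_impl; [|exact F]. intros s [hs|hs]; apply in_app_iff; [left; auto|right].
    rewrite <- (g_invK G s). apply in_map; auto.
Qed.

Lemma Forall_firstn' {A} (P : A -> Prop) k l : Forall P l -> Forall P (firstn k l).
Proof. revert l; induction k; intros l F; simpl; auto. destruct F; simpl; auto. Qed.
Lemma Forall_skipn' {A} (P : A -> Prop) k l : Forall P l -> Forall P (skipn k l).
Proof. revert l; induction k; intros l F; simpl; auto. destruct F; simpl; auto. Qed.

Lemma geod (G : Group) S (gen : generates G S) (z : G) :
  exists pk : nat -> G, forall k, k <= nrm G S z ->
    dd G S (one G) (pk k) = k /\ dd G S (pk k) z = nrm G S z - k.
Proof.
  destruct (nrm_has G S gen z) as [l [L [F P]]].
  exists (fun k => prodl G (firstn k l)). intros k hk.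
  assert (E : mul G (prodl G (firstn k l)) (prodl G (skipn k l)) = z).
  { rewrite <- prodl_app, firstn_skipn; auto. }
  assert (h1 : nrm G S (prodl G (firstn k l)) <= k).
  { apply nrm_le; auto. eexists; split; [|split; [apply Forall_firstn'; exact F|reflexivity]].
    rewrite length_firstn. lia. }
  assert (h2 : nrm G S (prodl G (skipn k l)) <= nrm G S z - k).
  { apply nrm_le; auto. eexists; split; [|split; [apply Forall_skipn'; exact F|reflexivity]].
    rewrite length_skipn. lia. }
  assert (h3 := nrm_mul G S gen (prodl G (firstn k l)) (prodl G (skipn k l))).
  rewrite E in h3.
  rewrite dd_one. unfold dd.
  replace (mul G (inv G (prodl G (firstn k l))) z) with (prodl G (skipn k l)).
  - lia.
  - rewrite <- E, g_mulKg. auto.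
Qed.

Lemma proj (G : Group) S (gen : generates G S) delta (hd : delta_hyperbolic G S delta)
  (x y : G) (q : nat -> G) N :
  dd G S x y = N -> (forall k, k <= N -> dd G S x (q k) = k /\ dd G S (q k) y = N - k) ->
  forall w, exists k, k <= N /\
   (2 * Z.of_nat (dd G S w (q k)) <= Z.of_nat (dd G S w x) + Z.of_nat (dd G S w y) - Z.of_nat N + 1 + 4 * Z.of_nat delta)%Z.
Proof.
  intros hN hq w.
  set (e := dd G S x w + N - dd G S w y).
  pose proof (dd_tri G S gen w x y). pose proof (dd_tri G S gen x w y).
  pose proof (dd_sym G S gen x w). pose proof (dd_tri G S gen x y w). pose proof (dd_sym G S gen y w).
  pose proof (Nat.div_mod e 2 ltac:(lia)). pose proof (Nat.mod_upper_bound e 2 ltac:(lia)).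
  set (k := e / 2) in *.
  assert (kN : k <= N) by lia.
  exists k. split; auto.
  destruct (hq k kN) as [q1 q2].
  pose proof (hyp4 G S gen delta hd x w y (q k)).
  pose proof (dd_sym G S gen w (q k)).
  pose proof (dd_sym G S gen y (q k)). lia.
Qed.

Lemma close (G : Group) S (gen : generates G S) delta (hd : delta_hyperbolic G S delta)
  (z : G) (pk : nat -> G)
  (hpk : forall k, k <= nrm G S z -> dd G S (one G) (pk k) = k /\ dd G S (pk k) z = nrm G S z - k)
  (D i : nat) (g : G) :
  nrm G S g <= D -> dd G S z (mul G g z) <= D -> 2 * D <= i -> i + D <= nrm G S z ->
  exists j, j <= nrm G S z /\ dd G S (pk i) (mul G g (pk j)) <= 4 * delta.
Proof.
  intros hg hz hi hR.
  set (R := nrm G S z) in *. set (p := pk i). set (gz := mul G g z).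
  destruct (hpk i ltac:(lia)) as [p1 p2]. fold p in p1, p2.
  assert (z1 : dd G S (one G) z = R) by (rewrite dd_one; auto).
  assert (g1 : dd G S g gz = R) by (unfold dd, gz; rewrite g_mulKg; auto).
  assert (g2 : dd G S (one G) g <= D) by (rewrite dd_one; auto).
  pose proof (hyp4 G S gen delta hd (one G) p z gz) as H1.
  pose proof (hyp4 G S gen delta hd gz p (one G) g) as H2.
  pose proof (dd_sym G S gen gz p). pose proof (dd_sym G S gen gz g).
  pose proof (dd_sym G S gen gz (one G)). pose proof (dd_sym G S gen p (one G)).
  pose proof (dd_sym G S gen z gz).
  pose proof (dd_tri G S gen (one G) gz z). pose proof (dd_tri G S gen p z gz).
  assert (hz' : dd G S z gz <= D) by exact hz.
  assert (PB : (Z.of_nat (dd G S p g) + Z.of_nat (dd G S p gz) - Z.of_nat R <= 4 * Z.of_nat delta)%Z) by lia.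
  destruct (proj G S gen delta hd g gz (fun k => mul G g (pk k)) R g1) with (w := p) as [j [hj Hj]].
  - intros k hk. destruct (hpk k hk) as [q1 q2]. split.
    + unfold dd. rewrite g_mulKg. rewrite <- dd_one. auto.
    + unfold gz. rewrite dd_left. auto.
  - exists j. split; auto. lia.
Qed.

Lemma nrm_gpow (G : Group) S (gen : generates G S) a n : nrm G S (gpow G a n) <= n * nrm G S a.
Proof.
  induction n; simpl.
  - rewrite nrm_one; auto.
  - pose proof (nrm_mul G S gen a (gpow G a n)). lia.
Qed.

Lemma comm_sym (G : Group) (u v : G) : mul G u v = mul G v u -> mul G v u = mul G u v.
Proof. auto. Qed.

Lemma comm_mul (G : Group) (u v w : G) : mul G u w = mul G w u -> mul G v w = mul G w v ->
  mul G (mul G u v) w = mul G w (mul G u v).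
Proof. intros h1 h2. rewrite <- mulA, h2, mulA, h1, mulA. auto. Qed.

Lemma noZ2 (G : Group) S (gen : generates G S) delta (hd : delta_hyperbolic G S delta) (a b : G)
  (comm : mul G a b = mul G b a)
  (inj : forall n m n' m', mul G (gpow G a n) (gpow G b m) = mul G (gpow G a n') (gpow G b m') -> n = n' /\ m = m') :
  False.
Proof.
  set (C := length (ball G S (4 * delta))).
  set (c := nrm G S a + nrm G S b).
  set (K := 2 * c + 8 * delta + 1).
  set (X := C * K).
  set (Dm := X * c).
  assert (injb : forall m m', gpow G b m = gpow G b m' -> m = m').
  { intros m m' E. apply (inj 0 m 0 m'). simpl. rewrite !mul1g. auto. }
  destruct (classic (exists M, 3 * Dm < nrm G S (gpow G b M))) as [[M hM]|no].
  2:{ set (N := length (ball G S (3 * Dm))).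
      assert (L : length (map (gpow G b) (seq 0 (N + 1))) <= N).
      { apply NoDup_incl_length.
        - apply Injective_map_NoDup; [exact injb | apply seq_NoDup].
        - intros g hg. apply in_map_iff in hg. destruct hg as [m [<- _]].
          apply ball_in; auto. destruct (le_lt_dec (nrm G S (gpow G b m)) (3 * Dm)); auto.
          exfalso; apply no; eauto. }
      rewrite length_map, length_seq in L. lia. }
  set (z := gpow G b M) in *.
  destruct (geod G S gen z) as [pk hpk].
  set (i := 2 * Dm).
  set (p := pk i).
  set (lo := i - Dm - 4 * delta).
  set (f := fun t => mul G (gpow G a (t / (X + 1))) (gpow G b (t mod (X + 1)))).
  set (cand := map (fun pr => mul G p (mul G (fst pr) (inv G (pk (snd pr)))))
                   (list_prod (ball G S (4 * delta)) (seq lo (2 * Dm + 8 * delta + 1)))).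
  assert (L : length (map f (seq 0 ((X + 1) * (X + 1)))) <= length cand).
  { apply NoDup_incl_length.
    - apply Injective_map_NoDup; [|apply seq_NoDup].
      intros t t' E. unfold f in E. apply inj in E. destruct E as [E1 E2].
      rewrite (Nat.div_mod t (X + 1)), (Nat.div_mod t' (X + 1)) by lia. rewrite E1, E2. auto.
    - intros g hg. apply in_map_iff in hg. destruct hg as [t [<- ht]].
      apply in_seq in ht.
      assert (hx : t / (X + 1) <= X).
      { assert (t / (X + 1) < X + 1) by (apply Nat.Div0.div_lt_upper_bound; lia). lia. }
      assert (hy : t mod (X + 1) <= X).
      { assert (t mod (X + 1) < X + 1) by (apply Nat.mod_upper_bound; lia). lia. }
      set (x := t / (X + 1)) in *. set (y := t mod (X + 1)) in *.
      unfold f. fold x y. set (g := mul G (gpow G a x) (gpow G b y)).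
      assert (ng : nrm G S g <= Dm).
      { unfold g. pose proof (nrm_mul G S gen (gpow G a x) (gpow G b y)).
        pose proof (nrm_gpow G S gen a x). pose proof (nrm_gpow G S gen b y).
        unfold Dm, c. nia. }
      assert (cz : mul G g z = mul G z g).
      { unfold g, z. apply comm_mul.
        - apply comm_sym, gpow_comm. apply comm_sym, gpow_comm. auto.
        - apply gpow_comm. apply comm_sym, gpow_comm. auto. }
      assert (dz : dd G S z (mul G g z) <= Dm).
      { unfold dd. rewrite cz, g_mulKg. auto. }
      destruct (close G S gen delta hd z pk hpk Dm i g ng dz ltac:(lia) ltac:(lia)) as [j [hj Hj]].
      fold p in Hj.
      destruct (hpk j hj) as [q1 q2].
      assert (e1 : dd G S g (mul G g (pk j)) = j).
      { unfold dd. rewrite g_mulKg, <- dd_one. auto. }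
      destruct (hpk i ltac:(lia)) as [p1 p2]. fold p in p1, p2.
      pose proof (dd_tri G S gen (one G) g (mul G g (pk j))).
      pose proof (dd_tri G S gen (one G) (mul G g (pk j)) p).
      pose proof (dd_sym G S gen p (mul G g (pk j))).
      pose proof (dd_tri G S gen g (one G) (mul G g (pk j))).
      pose proof (dd_sym G S gen g (one G)).
      pose proof (dd_tri G S gen (one G) p (mul G g (pk j))).
      assert (g1 : dd G S (one G) g <= Dm) by (rewrite dd_one; auto).
      apply in_map_iff. exists (mul G (inv G p) (mul G g (pk j)), j). split.
      + simpl. rewrite (mulA G p), g_mulVKg, <- mulA, g_mulgV, g_mulg1. auto.
      + apply in_prod.
        * apply ball_in; auto.
        * apply in_seq. unfold lo. clearbody i. lia. }
  unfold cand in L. rewrite !length_map, length_seq, length_prod, length_seq in L.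
  fold C in L. unfold Dm, X, K in L.
  destruct C as [|C']. { simpl in L. lia. }
  nia.
Qed.

Lemma conj_eq (G : Group) (g u x : G) :
  mul G g (mul G x (inv G g)) = mul G u (mul G x (inv G u)) ->
  mul G (mul G (inv G u) g) x = mul G x (mul G (inv G u) g).
Proof.
  intro E.
  transitivity (mul G (inv G u) (mul G (mul G g (mul G x (inv G g))) g)).
  - rewrite <- !mulA, mulVg, g_mulg1. auto.
  - rewrite E, <- !mulA, g_mulKg. auto.
Qed.

Theorem lemma5p3 (G : Group) (hG : hyperbolic_group G) (tfG : torsion_free G)
  (H : G -> Prop) (Hsub : is_subgroup G H) (Hret : is_retract G H) :
  malnormal G H.
Proof.
  intros g0 ng0 x hx hc.
  destruct (classic (x = one G)) as [e|nx]; auto. exfalso.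
  destruct hG as [S [delta [gen hd]]].
  destruct Hret as [phi [hom [inH hfix]]].
  assert (phi1 : phi (one G) = one G).
  { symmetry. apply (g_cancel G (phi (one G))). rewrite <- hom, !g_mulg1. auto. }
  assert (phiV : forall v, phi (inv G v) = inv G (phi v)).
  { intro v. apply g_inv_uniq. rewrite <- hom, g_mulgV. auto. }
  set (u := phi g0).
  set (c := mul G (inv G u) g0).
  assert (E : mul G g0 (mul G x (inv G g0)) = mul G u (mul G x (inv G u))).
  { rewrite <- (hfix _ hc) at 1. rewrite !hom, phiV, (hfix x hx). auto. }
  assert (cm : mul G c x = mul G x c) by (apply conj_eq; auto).
  assert (phic : phi c = one G).
  { unfold c. rewrite hom, phiV. unfold u. rewrite (hfix _ (inH g0)). apply mulVg. }
  assert (nc : c <> one G).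
  { intro e. apply ng0. unfold c in e.
    assert (e2 : mul G (inv G u) g0 = mul G (inv G u) u) by (rewrite e, mulVg; auto).
    apply g_cancel in e2. rewrite e2. apply inH. }
  apply (noZ2 G S gen delta hd x c (eq_sym cm)).
  intros n m n' m' Enm.
  assert (En : gpow G x n = gpow G x n').
  { assert (h := f_equal phi Enm). rewrite !hom, !(gpow_hom G phi hom phi1), phic, (hfix x hx), !gpow_one, !g_mulg1 in h. auto. }
  pose proof (gpow_inj G tfG x nx n n' En) as en. subst n'.
  apply g_cancel in Enm. split; auto.
  apply (gpow_inj G tfG c nc m m' Enm).
Qed.
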